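(* If a persistence module $\mathbb{V}$ contains a nonzero right-closed point, then $\mathbb{V}$ is not locally compact.
   Context: A persistence module is a functor $\mathbb{V}$ from the poset $[0,\infty)$ to $\mathbb{Q}$-vector spaces. An element $v_r\in\mathbb{V}(r)$ is a right-closed point if $\mathbb{V}(r\le r+\epsilon)(v_r)=0$ for all $\epsilon>0$. A persistence module is compact if it is a compact object of the category of persistence modules (equivalently a finite direct sum of interval modules $\mathbb{I}_{[s,t)}$, where $\mathbb{I}_{[s,t)}$ is $\mathbb{Q}$ on $[s,t)$ with identity structure maps and $0$ elsewhere). $\mathbb{V}$ is locally compact if every element $v\in\mathbb{V}(r)$ lies in some compact submodule of $\mathbb{V}$. *)

(* Defs.v *)
From Stdlib Require Import Reals.
From HB Require Import structures.
From mathcomp Require Import all_boot all_order all_algebra.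
Set Implicit Arguments. Unset Strict Implicit. Unset Printing Implicit Defensive.
Import GRing.Theory.
Local Open Scope ring_scope.

(* Reals are used only through function names (Rle, Rlt, Rplus, R0) to avoid
   notation clashes with ring_scope. *)

(* A persistence module: data of Q-vector spaces V(r) and maps V(r<=s).
   Only indices 0 <= r <= s matter; axioms are in [is_pmod]. *)
Record pmod := PMod {
  pm_sp :> R -> lmodType rat ;
  pm_map : forall r s : R, pm_sp r -> pm_sp s }.
Arguments pm_map : clear implicits.

Definition lin_map (U W : lmodType rat) (f : U -> W) : Prop :=
  forall (a : rat) (x y : U), f (a *: x + y) = a *: f x + f y.

Definition is_pmod (V : pmod) : Prop :=
  (forall r s, Rle R0 r -> Rle r s -> lin_map (pm_map V r s)) /\
  (forall r, Rle R0 r -> forall x : V r, pm_map V r r x = x) /\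
  (forall r s t, Rle R0 r -> Rle r s -> Rle s t ->
     forall x : V r, pm_map V s t (pm_map V r s x) = pm_map V r t x).

Definition pmorph (V W : pmod) (f : forall r, V r -> W r) : Prop :=
  (forall r, Rle R0 r -> lin_map (f r)) /\
  (forall r s, Rle R0 r -> Rle r s ->
     forall x : V r, f s (pm_map V r s x) = pm_map W r s (f r x)).

Definition pmono (V W : pmod) (f : forall r, V r -> W r) : Prop :=
  pmorph f /\ (forall r, Rle R0 r -> injective (f r)).

(* membership of r in [s, t), t = None meaning t = +oo *)
Definition in_itv (s : R) (t : option R) (r : R) : bool :=
  (if Rle_dec s r then true else false) &&
  (match t with None => true | Some t' => if Rlt_dec r t' then true else false end).

Definition lt_end (s : R) (t : option R) : Prop :=
  match t with None => True | Some t' => Rlt s t' end.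

(* The interval module I_[s,t): Q (as 'rV_1) on [s,t), 0 (as 'rV_0) elsewhere,
   identity maps inside the interval, zero otherwise. *)
Definition Imod (s : R) (t : option R) : pmod :=
  @PMod (fun r => 'rV[rat]_(in_itv s t r) : lmodType rat)
        (fun r r' x => const_mx (\sum_(j < in_itv s t r) x 0 j)).

(* W is compact: W is isomorphic to a finite direct sum of interval modules
   I_[s_i,t_i) (0 <= s_i < t_i <= +oo), i.e. there are morphisms
   f_i : I_[s_i,t_i) -> W exhibiting W (pointwise) as the direct sum. *)
Definition is_compact (W : pmod) : Prop :=
  exists (n : nat) (s : 'I_n -> R) (t : 'I_n -> option R)
         (f : forall (i : 'I_n) (r : R), Imod (s i) (t i) r -> W r),
    (forall i, Rle R0 (s i) /\ lt_end (s i) (t i)) /\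
    (forall i, pmorph (f i)) /\
    (forall r, Rle R0 r ->
       (forall w : W r, exists x : (forall i, Imod (s i) (t i) r),
           w = \sum_(i < n) f i r (x i)) /\
       (forall x : (forall i, Imod (s i) (t i) r),
           \sum_(i < n) f i r (x i) = 0 -> forall i, x i = 0)).

Definition right_closed (V : pmod) (r : R) (v : V r) : Prop :=
  forall eps, Rlt R0 eps -> pm_map V r (Rplus r eps) v = 0.

(* locally compact: every element lies in a compact submodule
   (a submodule = subobject, given by a monomorphism W >-> V). *)
Definition locally_compact (V : pmod) : Prop :=
  forall r, Rle R0 r -> forall v : V r,
    exists (W : pmod) (j : forall r', W r' -> V r'),
      is_pmod W /\ pmono j /\ is_compact W /\ exists w : W r, j r w = v.

(* Main.v *)
Require Import Defs.
From Stdlib Require Import Reals.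
From mathcomp Require Import all_boot all_order all_algebra.
From Stdlib Require Import Lra.

Import GRing.Theory.

Lemma lin0 (U W : lmodType rat) (f : U -> W) : lin_map f -> f 0%R = 0%R.
Proof.
move=> H; have := H 1%R 0%R 0%R; rewrite scale1r addr0 scale1r => E.
by apply: (@addrI _ (f 0%R)); rewrite addr0 -E.
Qed.

Arguments lin0 {U W f}.

Lemma linD (U W : lmodType rat) (f : U -> W) : lin_map f -> forall a b, f (a + b)%R = (f a + f b)%R.
Proof. by move=> H a b; have := H 1%R a b; rewrite !scale1r. Qed.

Arguments linD {U W f}.

Lemma linsum (U W : lmodType rat) (f : U -> W) n (g : 'I_n -> U) : lin_map f ->
  f (\sum_(i < n) g i)%R = (\sum_(i < n) f (g i))%R.
Proof.
move=> H; elim: n g => [|n IH] g; first by rewrite !big_ord0 lin0.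
by rewrite !big_ord_recr /= (linD H) IH.
Qed.

Arguments linsum {U W f n g}.

Lemma key (b b' : bool) (x : 'rV[rat]_b) : (b -> b') ->
  (const_mx (\sum_(j < b) x 0 j)%R : 'rV[rat]_b') = 0%R -> x = 0%R.
Proof.
case: b x => x; case: b' => //= H E.
- apply/rowP => k; have := congr1 (fun m : 'rV[rat]_1 => m ord0 ord0) E.
  rewrite !mxE big_ord1 (ord1 k) => <-; rewrite ?mxE; apply: congr1; exact: val_inj.
- by have := H isT.
- by apply/rowP => -[k hk].
- by apply/rowP => -[k hk].
Qed.

Lemma in_itv_iff s t x : Defs.in_itv s t x = true <->
  (Rle s x /\ match t with None => True | Some t' => Rlt x t' end).
Proof.
rewrite /Defs.in_itv; case: (Rle_dec s x) => h; case: t => [t'|] //=;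
  try case: (Rlt_dec x t') => h' /=; split; try tauto; try by [];
  move=> [] //.
Qed.

Lemma eps_list (I : eqType) (P : I -> R -> Prop)
  (mono : forall i e e', Rlt 0 e' -> Rle e' e -> P i e -> P i e')
  (ex : forall i, exists e, Rlt 0 e /\ P i e) (l : seq I) :
  exists e, Rlt 0 e /\ forall i, i \in l -> P i e.
Proof.
elim: l => [|a l [e [he IH]]]; first by exists R1; split; [lra|].
have [e' [he' Pa]] := ex a.
exists (Rmin e e'); split; first by apply Rmin_pos.
move=> i; rewrite in_cons => /orP [/eqP -> | il].
- apply: (mono _ e') => //; [by apply Rmin_pos | by apply Rmin_r].
- apply: (mono _ e) => //; [by apply Rmin_pos | by apply Rmin_l | by apply IH].
Qed.

Theorem mainTheorem17 (V : pmod) (HV : is_pmod V) (r : R) (hr : Rle R0 r)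
  (v : V r) (hv : v <> 0%R) (hrc : right_closed v) :
  ~ locally_compact V.
Proof.
move=> LC.
have [W [j [HW [[[jlin jnat] jinj] [[n [s [t [f [Hst [Hf Hdec]]]]]] [w Hw]]]]]] := LC r hr v.
pose P := fun i e => Defs.in_itv (s i) (t i) r = true -> Defs.in_itv (s i) (t i) (Rplus r e) = true.
have Pmono : forall i e e', Rlt 0 e' -> Rle e' e -> P i e -> P i e'.
  move=> i e e' h1 h2; rewrite /P => h3 h4; move: h4 (h3 h4); rewrite !in_itv_iff.
  by case: (t i) => [t'|] /= [? ?] [? ?]; split; try lra.
have Pex : forall i, exists e, Rlt 0 e /\ P i e.
  move=> i; rewrite /P; case E: (t i) => [t'|].
    case: (Rlt_dec r t') => h.
      exists (Rdiv (Rminus t' r) 2); split; [lra|]; rewrite !in_itv_iff /= => -[? ?]; split; lra.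
    exists R1; split; [lra|]; rewrite !in_itv_iff /= => -[? ?]; split; lra.
  exists R1; split; [lra|]; rewrite !in_itv_iff /= => -[? ?]; split; lra.
have [eps [heps Heps]] := @eps_list _ P Pmono Pex (enum 'I_n).
have hr' : Rle R0 (Rplus r eps) by lra.
have hrr : Rle r (Rplus r eps) by lra.
have [HWlin [_ _]] := HW.
have [x Ex] := (Hdec r hr).1 w.
pose y := fun i => pm_map (Imod (s i) (t i)) r (Rplus r eps) (x i).
have Wz : pm_map W r (Rplus r eps) w = 0%R.
  apply: (jinj _ hr'); rewrite (jnat _ _ hr hrr) Hw (hrc _ heps).
  by rewrite (lin0 (jlin _ hr')).
have Sy : (\sum_(i < n) f i (Rplus r eps) (y i))%R = 0%R.
  rewrite -[X in _ = X]Wz Ex (linsum (HWlin _ _ hr hrr)); apply: eq_bigr => i _.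
  by rewrite /y ((Hf i).2 _ _ hr hrr).
have Y0 := (Hdec _ hr').2 y Sy.
have X0 : forall i, x i = 0%R.
  move=> i; have H : P i eps by apply: Heps; rewrite mem_enum.
  have := Y0 i; rewrite /y /=. exact: (@key (Defs.in_itv (s i) (t i) r) (Defs.in_itv (s i) (t i) (Rplus r eps)) (x i) H).
apply: hv; rewrite -Hw Ex big1; first by rewrite (lin0 (jlin _ hr)).
by move=> i _; rewrite X0 (lin0 ((Hf i).1 _ hr)).
Qed.
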